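(* Best-response dynamics for simultaneous plurality voting over multiple issues need not converge, even when all issues are binary. Precisely: there exist $p=2$ binary issues, $n=3$ agents with strict rankings $R_1,R_2,R_3$ over $\{0,1\}^2$, and an initial vote profile (indeed, the truthful profile) from which there is an infinite sequence of best-response steps. One instance: $R_1:(0,1)\succ(1,1)\succ(1,0)\succ(0,0)$, $R_2:(0,0)\succ(0,1)\succ(1,1)\succ(1,0)$, $R_3:(1,0)\succ(1,1)\succ(0,0)\succ(0,1)$, starting from the truthful profile $((0,1),(0,0),(1,0))$. From every profile on this cycle, every available best-response step lies on the cycle, so no scheduler yields convergence.
   Context: Issues $\mathcal P=\{1,\dots,p\}$, each with a finite candidate set $D_i$; alternatives are $\mathcal D=\prod_{i} D_i$. Issues are binary if $D_i=\{0,1\}$ for all $i$. Each of $n$ agents $j$ has a strict linear order $R_j$ (written $\succ_j$) over $\mathcal D$. A vote profile is $a=(a_1,\dots,a_n)\in\mathcal D^n$ with $a_j=(a_j^1,\dots,a_j^p)$. The truthful profile has each agent voting for their top-ranked alternative. Plurality outcome: on issue $i$ the score of $c\in D_i$ is $s^i(c;a)=|\{j: a^i_j=c\}|$, and $f^i(a)$ is the candidate of maximum score, with ties broken lexicographically (for $\{0,1\}$, $0$ beats $1$ in a tie). The outcome is $f(a)=(f^1(a),\dots,f^p(a))$. Iterative voting: starting from an initial profile, at each round a scheduler picks an agent $j$ and an issue $i$ for which $j$ has an improvement step. The agent changes only their vote on issue $i$, and all other votes stay unchanged. A best-response step for $j$ on issue $i$ from $a$ replaces $a_j$ by the vote $\hat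 a_j$ (differing from $a_j$ only on issue $i$) whose outcome $f(a_{-j},\hat a_j)$ is $j$'s most preferred among all such votes. This step is taken only if that outcome is strictly better for $j$ than $f(a)$. A profile with no improvement step for any agent is an equilibrium. The dynamics converge if every improvement sequence is finite from every initial profile. *)

(* Defs.v *)
(* Binary issues: candidate 0 is [false], candidate 1 is [true]. *)
From mathcomp Require Import all_boot.
Set Implicit Arguments. Unset Strict Implicit. Unset Printing Implicit Defensive.

Definition alt (p : nat) := {ffun 'I_p -> bool}.
Definition profile (p n : nat) := {ffun 'I_n -> alt p}.

(* A strict linear order on a finite type; [R x y] reads "x is strictly preferred to y". *)
Definition strict_linear_order (T : finType) (R : rel T) : Prop :=
  (forall x, ~~ R x x) /\
  (forall x y z, R x y -> R y z -> R x z) /\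
  (forall x y, x != y -> R x y || R y x).

Definition score p n (a : profile p n) (i : 'I_p) (c : bool) : nat :=
  #|[set j : 'I_n | a j i == c]|.

(* Plurality winner on issue i; ties broken lexicographically (0 beats 1). *)
Definition plur_issue p n (a : profile p n) (i : 'I_p) : bool :=
  score a i false < score a i true.

Definition outcome p n (a : profile p n) : alt p := [ffun i => plur_issue a i].

Definition upd p n (a : profile p n) (j : 'I_n) (v : alt p) : profile p n :=
  [ffun k => if k == j then v else a k].

Definition differs_only_on p (i : 'I_p) (v w : alt p) : Prop :=
  forall k, k != i -> v k = w k.

Definition br_step p n (R : 'I_n -> rel (alt p)) (j : 'I_n) (i : 'I_p)
    (a b : profile p n) : Prop :=
  exists v : alt p,
    [/\ differs_only_on i v (a j),
        b = upd a j v,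
        (forall w : alt p, differs_only_on i w (a j) ->
            outcome (upd a j w) = outcome b \/ R j (outcome b) (outcome (upd a j w)))
      & R j (outcome b) (outcome a)].

Definition some_br_step p n (R : 'I_n -> rel (alt p)) (a b : profile p n) : Prop :=
  exists j i, br_step R j i a b.

Definition truthful p n (R : 'I_n -> rel (alt p)) (a : profile p n) : Prop :=
  forall j (x : alt p), x != a j -> R j (a j) x.

Inductive br_reachable p n (R : 'I_n -> rel (alt p)) (a : profile p n) :
    profile p n -> Prop :=
  | br_refl : br_reachable R a a
  | br_next b c : br_reachable R a b -> some_br_step R b c -> br_reachable R a c.

(* Main.v *)
Require Import Defs.
From mathcomp Require Import all_boot.
Set Implicit Arguments. Unset Strict Implicit.

Definition o0 : 'I_2 := @Ordinal 2 0 isT.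
Definition o1 : 'I_2 := @Ordinal 2 1 isT.
Definition j0 : 'I_3 := @Ordinal 3 0 isT.
Definition j1 : 'I_3 := @Ordinal 3 1 isT.
Definition j2 : 'I_3 := @Ordinal 3 2 isT.

Lemma ord2 (i : 'I_2) : i = o0 \/ i = o1.
Proof. case: i => [[|[|m]] H] //; [left|right]; exact: val_inj. Qed.
Lemma ord3 (i : 'I_3) : [\/ i = j0, i = j1 | i = j2].
Proof. case: i => [[|[|[|m]]] H] //; [apply: Or31|apply: Or32|apply: Or33]; exact: val_inj. Qed.

Definition mk (x y : bool) : alt 2 := [ffun i : 'I_2 => if val i == 0 then x else y].
Definition mkp (u v w : alt 2) : profile 2 3 :=
  [ffun j : 'I_3 => if val j == 0 then u else if val j == 1 then v else w].

Lemma mk0 x y : mk x y o0 = x. Proof. by rewrite ffunE. Qed.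
Lemma mk1 x y : mk x y o1 = y. Proof. by rewrite ffunE. Qed.
Lemma alt_eta (x : alt 2) : x = mk (x o0) (x o1).
Proof. apply/ffunP => i; rewrite ffunE; by case: (ord2 i) => ->. Qed.
Lemma mkp0 u v w : mkp u v w j0 = u. Proof. by rewrite ffunE. Qed.
Lemma mkp1 u v w : mkp u v w j1 = v. Proof. by rewrite ffunE. Qed.
Lemma mkp2 u v w : mkp u v w j2 = w. Proof. by rewrite ffunE. Qed.

Lemma upd0 u v w x : upd (mkp u v w) j0 x = mkp x v w.
Proof. apply/ffunP => k; rewrite !ffunE; by case: (ord3 k) => ->. Qed.
Lemma upd1 u v w x : upd (mkp u v w) j1 x = mkp u x w.
Proof. apply/ffunP => k; rewrite !ffunE; by case: (ord3 k) => ->. Qed.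
Lemma upd2 u v w x : upd (mkp u v w) j2 x = mkp u v x.
Proof. apply/ffunP => k; rewrite !ffunE; by case: (ord3 k) => ->. Qed.

Definition maj (x y z : bool) := [|| x && y, x && z | y && z].

Lemma outcome_mkp u v w :
  outcome (mkp u v w) = mk (maj (u o0) (v o0) (w o0)) (maj (u o1) (v o1) (w o1)).
Proof.
apply/ffunP => i; rewrite !ffunE /plur_issue /score.
rewrite -!sum1_card !(big_mkcond (fun j => j \in _)) !big_ord_recl !big_ord0 /=.
rewrite !inE !ffunE /=.
case: (ord2 i) => -> /=;
  by case: (u _); case: (v _); case: (w _).
Qed.

Definition prefs : seq (seq (bool * bool)) :=
  [:: [:: (false,true); (true,true); (true,false); (false,false)];
      [:: (false,false); (false,true); (true,true); (true,false)];
      [:: (true,false); (true,true); (false,false); (false,true)]].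

Definition rk (j : 'I_3) (x : alt 2) : nat := index (x o0, x o1) (nth [::] prefs j).
Definition RR (j : 'I_3) : rel (alt 2) := fun x y => rk j x < rk j y.

Definition c0 := mkp (mk false true) (mk false false) (mk true false).
Definition c1 := mkp (mk true true) (mk false false) (mk true false).
Definition c2 := mkp (mk true true) (mk false true) (mk true false).
Definition c3 := mkp (mk false true) (mk false true) (mk true false).
Definition inC (b : profile 2 3) := b = c0 \/ b = c1 \/ b = c2 \/ b = c3.

Lemma o10 : (o1 == o0) = false. Proof. by []. Qed.

Lemma vform (i : 'I_2) (v w : alt 2) : differs_only_on i v w ->
  exists c, v = mk (if i == o0 then c else w o0) (if i == o0 then w o1 else c).
Proof.
move=> Hd; case: (ord2 i) => Ei; subst i; rewrite ?eqxx ?o10.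
  by exists (v o0); rewrite {1}(alt_eta v) (Hd o1).
by exists (v o1); rewrite {1}(alt_eta v) (Hd o0).
Qed.

Ltac simp := rewrite ?upd0 ?upd1 ?upd2 ?outcome_mkp ?mkp0 ?mkp1 ?mkp2 /RR /rk ?mk0 ?mk1 /=.

Lemma closed a b : inC a -> some_br_step RR a b -> inC b.
Proof.
move=> Ha [j [i [v [Hd -> _ Himp]]]].
have [c Hv] := vform Hd; subst v; clear Hd.
move: Himp; case: Ha => [->|[->|[->|->]]];
case: (ord3 j) => ->; case: (ord2 i) => ->; rewrite ?eqxx ?o10 /c0 /c1 /c2 /c3;
case: c; simp; rewrite /inC /c0 /c1 /c2 /c3; (by []) || (by auto).
Qed.

Lemma ord2_ind (P : 'I_2 -> Prop) : P o0 -> P o1 -> forall k, P k.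
Proof. by move=> H0 H1 k; case: (ord2 k) => ->. Qed.

Lemma mkstep (a : profile 2 3) (j : 'I_3) (i : 'I_2) (v : alt 2) : differs_only_on i v (a j) ->
  (forall w, differs_only_on i w (a j) ->
     outcome (upd a j w) = outcome (upd a j v) \/
     RR j (outcome (upd a j v)) (outcome (upd a j w))) ->
  RR j (outcome (upd a j v)) (outcome a) -> some_br_step RR a (upd a j v).
Proof. by move=> H1 H2 H3; exists j, i, v. Qed.

Ltac dostep j i v :=
  apply: (@mkstep _ j i v);
  [ apply: ord2_ind => //; simp; (by intros)
  | move=> ? /vform [[] ->]; rewrite ?eqxx ?o10; simp; (by []) || (by auto)
  | simp; done ].

Lemma s0 : some_br_step RR c0 c1.
Proof.
have -> : c1 = upd c0 j0 (mk true true) by rewrite /c0 upd0.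
dostep j0 o0 (mk true true).
Qed.
Lemma s1 : some_br_step RR c1 c2.
Proof.
have -> : c2 = upd c1 j1 (mk false true) by rewrite /c1 upd1.
dostep j1 o1 (mk false true).
Qed.
Lemma s2 : some_br_step RR c2 c3.
Proof.
have -> : c3 = upd c2 j0 (mk false true) by rewrite /c2 upd0.
dostep j0 o0 (mk false true).
Qed.
Lemma s3 : some_br_step RR c3 c0.
Proof.
have -> : c0 = upd c3 j1 (mk false false) by rewrite /c3 upd1.
dostep j1 o1 (mk false false).
Qed.

Lemma slo j : strict_linear_order (RR j).
Proof.
split; [|split].
- by move=> x; rewrite /RR ltnn.
- by move=> x y z; rewrite /RR; apply: ltn_trans.
- move=> x y; rewrite (alt_eta x) (alt_eta y).
  move: (x o0) (x o1) (y o0) (y o1) => [] [] [] [] H;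
  case: (ord3 j) => ->; simp; (by []) || (by rewrite eqxx in H).
Qed.

Lemma truth : truthful RR c0.
Proof.
move=> j x; rewrite (alt_eta x).
move: (x o0) (x o1) => [] [] H;
case: (ord3 j) => Ej; subst j; move: H; rewrite /c0; simp; move=> H;
(by []) || (by rewrite eqxx in H).
Qed.

Definition cyc := [:: c0; c1; c2; c3].

Lemma cyc_step k : k < 4 -> some_br_step RR (nth c0 cyc k) (nth c0 cyc (k.+1 %% 4)).
Proof.
case: k => [|[|[|[|k]]]] // _; [exact: s0|exact: s1|exact: s2|exact: s3].
Qed.

Theorem proposition1 :
  exists (R : 'I_3 -> rel (alt 2)) (a0 : profile 2 3),
    (forall j, strict_linear_order (R j)) /\
    truthful R a0 /\
    (exists s : nat -> profile 2 3,
        s 0 = a0 /\ forall t, some_br_step R (s t) (s t.+1)) /\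
    (forall a, br_reachable R a0 a -> exists b, some_br_step R a b).
Proof.
exists RR, c0; split; first exact: slo.
split; first exact: truth.
split.
  exists (fun t => nth c0 cyc (t %% 4)); split => // t.
  have -> : t.+1 %% 4 = (t %% 4).+1 %% 4 by rewrite -addn1 -modnDml addn1.
  by apply: cyc_step; rewrite ltn_mod.
have inv : forall a, br_reachable RR c0 a -> inC a.
  move=> a; elim => [|b c _ IH st]; first by left.
  exact: closed IH st.
move=> a /inv [->|[->|[->|->]]]; eexists; [exact: s0|exact: s1|exact: s2|exact: s3].
Qed.
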